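(* For all positive integers $\Delta$ and positive reals $\xi$ there are positive constants $\nu$ and $c$ such that if $p\ge c(\log n/n)^{1/\Delta}$, then the following holds a.a.s. for $\Gamma=G(n,p)$ on vertex set $V$. Let $X$ be any subset of $V$ and $\mathcal{F}$ any family of pairwise disjoint $\Delta$-sets in $V\setminus X$. If $|X|\le\nu np^\Delta|\mathcal{F}|$ and $|X|,|\mathcal{F}|\le\xi n$, then $\mathrm{stars}_\Gamma(X,\mathcal{F})\le p^\Delta|X||\mathcal{F}|+6\xi np^\Delta|\mathcal{F}|$.
   Context: $G(n,p)$ is the random graph on $[n]$ with edges present independently with probability $p$; a.a.s. means with probability tending to $1$ as $n\to\infty$ (simultaneously for all such $X,\mathcal{F}$). For a graph $G$, a vertex set $X$ and a family $\mathcal{F}$ of pairwise disjoint $\ell$-sets outside $X$, $\mathrm{stars}_G(X,\mathcal{F})$ is the number of pairs $(x,F)$ with $x\in X$, $F\in\mathcal{F}$ and $F\subseteq N_G(x)$. *)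

(* Defs.v *)
From HB Require Import structures.
From mathcomp Require Import all_boot all_order all_algebra.
From mathcomp Require Import all_classical all_reals all_analysis.
Set Implicit Arguments. Unset Strict Implicit. Unset Printing Implicit Defensive.
Import Order.TTheory GRing.Theory Num.Theory.
Local Open Scope ring_scope.

Definition pairs (n : nat) : {set {set 'I_n}} := [set e : {set 'I_n} | #|e| == 2%N].

Definition is_graph (n : nat) (E : {set {set 'I_n}}) : bool := E \subset pairs n.

Definition gnp_weight (R : realType) (n : nat) (p : R) (E : {set {set 'I_n}}) : R :=
  p ^+ #|E| * (1 - p) ^+ (#|pairs n| - #|E|).

Definition gnp_prob (R : realType) (n : nat) (p : R)
    (A : {set {set 'I_n}} -> bool) : R :=
  \sum_(E : {set {set 'I_n}} | is_graph E && A E) gnp_weight p E.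

Definition nbhd (n : nat) (E : {set {set 'I_n}}) (x : 'I_n) : {set 'I_n} :=
  [set y | [set x; y] \in E].

Definition stars (n : nat) (E : {set {set 'I_n}}) (X : {set 'I_n})
    (F : {set {set 'I_n}}) : nat :=
  #|[set xF : 'I_n * {set 'I_n} | (xF.1 \in X) && (xF.2 \in F)
                                   && (xF.2 \subset nbhd E xF.1)]|.

Definition stars_good (R : realType) (Delta : nat) (nu xi p : R) (n : nat)
    (E : {set {set 'I_n}}) : bool :=
  [forall X : {set 'I_n}, forall F : {set {set 'I_n}},
     ([forall f in F, (#|f| == Delta) && [disjoint f & X]] && finset.trivIset F
      && (#|X|%:R <= nu * n%:R * p ^+ Delta * #|F|%:R)
      && (#|X|%:R <= xi * n%:R) && (#|F|%:R <= xi * n%:R))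
     ==> ((stars E X F)%:R <= p ^+ Delta * #|X|%:R * #|F|%:R
                              + 6 * xi * n%:R * p ^+ Delta * #|F|%:R)].

(* Main.v *)
Require Import Defs.
From HB Require Import structures.
From mathcomp Require Import all_boot all_order all_algebra.
From mathcomp Require Import all_classical all_reals all_analysis.
From mathcomp Require Import ring lra.
Import Order.TTheory GRing.Theory Num.Theory.
Import numFieldNormedType.Exports.
Import mathcomp.boot.fintype mathcomp.boot.finset.
Local Open Scope ring_scope.

Section Prob.
Variables (R : realType) (n : nat) (p : R).
Hypothesis p01 : 0 <= p <= 1.

Lemma weight_ge0 (E : {set {set 'I_n}}) : 0 <= gnp_weight p E.
Proof.
case/andP: p01 => p0 p1.
by rewrite /gnp_weight mulr_ge0 // exprn_ge0 // subr_ge0.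
Qed.

Lemma prob_sup (T : {set {set 'I_n}}) : T \subset pairs n ->
  \sum_(E | is_graph E && (T \subset E)) gnp_weight p E = p ^+ #|T|.
Proof.
move=> TP.
pose F := fun e : {set 'I_n} => if e \in pairs n then p else 0.
pose G := fun e : {set 'I_n} => if e \in pairs n then (if e \in T then 0 else 1 - p) else 1.
have L : \prod_e (F e + G e) = p ^+ #|T|.
  rewrite -prodr_const [RHS]big_mkcond /=; apply: eq_bigr => e _.
  rewrite /F /G; case: ifP => eP; case: ifP => eT //.
  - by rewrite addr0.
  - by rewrite addrC subrK.
  - by rewrite (subsetP TP) in eP.
  - by rewrite add0r.
rewrite -L bigA_distr (big_mkcond (fun E => is_graph E && (T \subset E))) /=.
apply: eq_bigr => J _.
case: ifP => [/andP[JP TJ] | Hc].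
- rewrite /gnp_weight.
  rewrite (bigID (fun i => i \in J)) /=.
  rewrite (eq_bigr (fun _ => p)); last first.
    by move=> i iJ; rewrite iJ /F (subsetP JP).
  rewrite prodr_const.
  rewrite (bigID (fun i => i \in pairs n)) /=.
  rewrite [X in _ * (_ * X)](eq_bigr (fun _ => 1)); last first.
    by move=> i /andP[/negbTE iJ /negbTE iP]; rewrite iJ /G iP.
  rewrite big1_eq mulr1.
  rewrite (eq_bigr (fun _ => 1 - p)); last first.
    move=> i /andP[/negbTE iJ iP]; rewrite iJ /G iP.
    by case: ifP => // iT; rewrite (subsetP TJ) in iJ.
  rewrite prodr_const; congr (_ * _ ^+ _).
  rewrite -(cardsID J (pairs n)) (setIidPr JP) addKn.
  by apply: eq_card => i; rewrite in_setD.
- have [i Hi] : exists i, (if i \in J then F i else G i) = 0.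
    move: Hc; rewrite /is_graph; case: (boolP (J \subset pairs n)) => JP /=.
      move/negbT/subsetPn => [i iT iJ]; exists i; rewrite (negbTE iJ) /G.
      by rewrite (subsetP TP) // iT.
    move/subsetPn: JP => [i iJ iP] _; exists i.
    by rewrite iJ /F (negbTE iP).
  by rewrite (bigD1 i) //= Hi mul0r.
Qed.

Lemma prob_total : \sum_(E : {set {set 'I_n}} | is_graph E) gnp_weight p E = 1.
Proof.
have -> : 1 = p ^+ #|(set0 : {set {set 'I_n}})| by rewrite cards0.
rewrite -prob_sup ?sub0set //.
by apply: eq_bigl => E; rewrite sub0set andbT.
Qed.

Lemma prob_compl (A : {set {set 'I_n}} -> bool) :
  gnp_prob p A = 1 - \sum_(E | is_graph E && ~~ A E) gnp_weight p E.
Proof.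
rewrite -prob_total (bigID A) /= addrK /gnp_prob.
by [].
Qed.

End Prob.

Set Implicit Arguments. Unset Strict Implicit.

Section Comb.
Variables (n Delta : nat).
Local Notation V := 'I_n.
Local Notation W := (('I_n * {set 'I_n})%type).

Definition starset (E : {set {set V}}) (X : {set V}) (F : {set {set V}}) : {set W} :=
  [set xF : W | (xF.1 \in X) && (xF.2 \in F) && (xF.2 \subset nbhd E xF.1)].

Lemma stars_card E X F : stars E X F = #|starset E X F|.
Proof. by []. Qed.

Definition Dom (S : {set W}) : {set W * V} :=
  [set wy : W * V | (wy.1 \in S) && (wy.2 \in wy.1.2)].

Definition edges (S : {set W}) : {set {set V}} :=
  [set [set wy.1.1; wy.2] | wy in Dom S].

Lemma card_Dom (S : {set W}) : (forall w, w \in S -> #|w.2| = Delta) ->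
  #|Dom S| = (#|S| * Delta)%N.
Proof.
move=> HS.
rewrite -sum_nat_const.
rewrite (eq_bigr (fun w : W => \sum_(y in w.2) 1)%N); last first.
  by move=> w wS; rewrite sum1_card HS.
rewrite pair_big_dep /= -sum1_card.
by apply: eq_bigl => wy; rewrite inE.
Qed.

Definition okXF (X : {set V}) (F : {set {set V}}) :=
  [forall f in F, (#|f| == Delta) && [disjoint f & X]] && trivIset F.

Lemma okXF_disj {X F f y} : okXF X F -> f \in F -> y \in f -> y \notin X.
Proof.
case/andP => /forall_inP H _ fF yf.
case/andP: (H f fF) => _ /disjoint_setI0 D.
apply/negP => yX.
have : y \in f :&: X by rewrite inE yf yX.
by rewrite D inE.
Qed.

Lemma card_edges X F (S : {set W}) : okXF X F -> S \subset setX X F ->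
  #|edges S| = (#|S| * Delta)%N.
Proof.
move=> ok SXF.
have Hw w : w \in S -> (w.1 \in X) && (w.2 \in F).
  by move=> wS; have := subsetP SXF w wS; rewrite inE.
rewrite -card_Dom; last first.
  move=> w /Hw /andP[_ wF]; case/andP: ok => /forall_inP H _.
  by case/andP: (H _ wF) => /eqP.
apply: card_in_imset => -[[x f] y] [[x' f'] y']; rewrite !inE /=.
move=> /andP[wS yf] /andP[w'S y'f'] E.
have /andP[xX fF] := Hw _ wS.
have /andP[x'X f'F] := Hw _ w'S.
have yX := okXF_disj ok fF yf.
have y'X := okXF_disj ok f'F y'f'.
have x'in : x' \in [set x; y] by rewrite E !inE eqxx.
rewrite !inE in x'in.
case/orP: x'in => /eqP ex; last by rewrite -ex x'X in yX.
subst x'.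
have yin : y \in [set x; y'] by rewrite -E !inE eqxx orbT.
rewrite !inE in yin.
case/orP: yin => /eqP ey; first by rewrite ey xX in yX.
subst y'.
case/andP: ok => _ /trivIsetP T.
have [ff'|nff'] := eqVneq f f'; first by rewrite ff'.
have := T _ _ fF f'F nff'.
move/disjoint_setI0 => D.
have : y \in f :&: f' by rewrite inE yf y'f'.
by rewrite D inE.
Qed.

Lemma edges_pairs X F (S : {set W}) : okXF X F -> S \subset setX X F ->
  edges S \subset pairs n.
Proof.
move=> ok SXF; apply/subsetP => e /imsetP[[[x f] y] /=].
rewrite inE /= => /andP[wS yf] ->.
have := subsetP SXF _ wS; rewrite inE /= => /andP[xX fF].
rewrite inE cards2.
have yX := okXF_disj ok fF yf.
suff -> : x != y by [].
by apply/negP => /eqP exy; rewrite -exy xX in yX.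
Qed.

Lemma edges_sub E X F (S : {set W}) : S \subset starset E X F -> edges S \subset E.
Proof.
move=> SS; apply/subsetP => e /imsetP[[[x f] y] /=].
rewrite inE /= => /andP[wS yf] ->.
have := subsetP SS _ wS; rewrite inE /= => /andP[_ fN].
by have := subsetP fN y yf; rewrite inE.
Qed.

Lemma starset_sub E X F : starset E X F \subset setX X F.
Proof. by apply/subsetP => w; rewrite !inE => /andP[/andP[-> ->] _]. Qed.

Lemma ex_sub (T : finType) (A : {set T}) k : (k <= #|A|)%N ->
  exists B : {set T}, (B \subset A) && (#|B| == k).
Proof.
move=> kA.
have : (0 < #|[set B : {set T} | B \subset A & #|B| == k]|)%N.
  by rewrite cards_draws bin_gt0.
case/card_gt0P => B; rewrite inE => H; by exists B.
Qed.

End Comb.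


Lemma le_sum_term (R : realType) (I : finType) (P : pred I) (f : I -> R) i :
  P i -> (forall j, P j -> 0 <= f j) -> f i <= \sum_(j | P j) f j.
Proof.
move=> Pi H; rewrite (bigD1 i) //= lerDl sumr_ge0 // => j /andP[Pj _].
exact: H.
Qed.

Section Union.
Variables (R : realType) (n Delta : nat) (p nu xi : R).
Hypothesis p01 : 0 <= p <= 1.
Hypothesis xi0 : 0 <= xi.

Definition HypXF (X : {set 'I_n}) (F : {set {set 'I_n}}) : bool :=
  [forall f in F, (#|f| == Delta) && [disjoint f & X]] && finset.trivIset F
      && (#|X|%:R <= nu * n%:R * p ^+ Delta * #|F|%:R)
      && (#|X|%:R <= xi * n%:R) && (#|F|%:R <= xi * n%:R).

Definition sfn (m : nat) : nat := (Num.truncn (6 * xi * n%:R * p ^+ Delta * m%:R)).+1.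

Lemma Hyp_ok X F : HypXF X F -> okXF Delta X F.
Proof. by case/andP => /andP[/andP[/andP[A B] _] _] _; rewrite /okXF A B. Qed.

Lemma bad_witness (E : {set {set 'I_n}}) : ~~ stars_good Delta nu xi p E ->
  exists X F, HypXF X F /\ exists S : {set ('I_n * {set 'I_n})}, (S \subset starset E X F) && (#|S| == sfn #|F|).
Proof.
move/forallPn => [X /forallPn [F]]; rewrite negb_imply => /andP[H C].
exists X, F; split; first exact: H.
apply: ex_sub; rewrite -stars_card.
rewrite /sfn truncn_lt_nat; last first.
  case/andP: p01 => p0 _.
  by rewrite !mulr_ge0 // ?exprn_ge0.
rewrite -ltNge in C; apply: le_lt_trans C.
rewrite lerDr; case/andP: p01 => p0 _.
by rewrite !mulr_ge0 // ?exprn_ge0.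
Qed.

Lemma weight_prod_sub (S : {set ('I_n * {set 'I_n})}) X F :
  HypXF X F -> S \subset setX X F ->
  \sum_(E : {set {set 'I_n}} | is_graph E) gnp_weight p E * (edges S \subset E)%:R = p ^+ Delta ^+ #|S|.
Proof.
move=> H SXF.
rewrite -big_filter -[RHS]mulr1.
have ok := Hyp_ok H.
rewrite big_filter big_mkcond /=.
rewrite (eq_bigr (fun E => if is_graph E && (edges S \subset E) then gnp_weight p E else 0)); last first.
  by move=> E _; case: (is_graph E); case: (edges S \subset E); rewrite ?mulr1 ?mulr0.
rewrite -big_mkcond /= prob_sup //; last exact: edges_pairs ok SXF.
by rewrite (card_edges ok SXF) -exprM mulnC mulr1.
Qed.

Lemma bad_bound :
  \sum_(E : {set {set 'I_n}} | is_graph E && ~~ stars_good Delta nu xi p E) gnp_weight p E <=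
  \sum_(X : {set 'I_n}) \sum_(F | HypXF X F)
     ('C(#|X| * #|F|, sfn #|F|))%:R * p ^+ Delta ^+ sfn #|F|.
Proof.
pose g (E : {set {set 'I_n}}) := \sum_(X : {set 'I_n}) \sum_(F | HypXF X F)
   \sum_(S : {set ('I_n * {set 'I_n})} | (S \subset setX X F) && (#|S| == sfn #|F|))
      gnp_weight p E * (edges S \subset E)%:R.
have g0 E : 0 <= g E.
  apply: sumr_ge0 => X _; apply: sumr_ge0 => F _; apply: sumr_ge0 => S _.
  by rewrite mulr_ge0 // weight_ge0.
apply: (@le_trans _ _ (\sum_(E | is_graph E) g E)).
  apply: (@le_trans _ _ (\sum_(E | is_graph E && ~~ stars_good Delta nu xi p E) g E)).
    apply: ler_sum => E /andP[_ bad].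
    have [X [F [H [S /andP[SS /eqP cS]]]]] := bad_witness bad.
    have SXF : S \subset setX X F := subset_trans SS (starset_sub _ _ _).
    rewrite /g; apply: le_trans (le_sum_term (i := X) _ _) => //; last first.
      move=> X' _; apply: sumr_ge0 => F' _; apply: sumr_ge0 => S' _.
      by rewrite mulr_ge0 // weight_ge0.
    apply: le_trans (le_sum_term (i := F) _ _) => //; last first.
      move=> F' _; apply: sumr_ge0 => S' _.
      by rewrite mulr_ge0 // weight_ge0.
    apply: le_trans (le_sum_term (i := S) _ _); last first.
    - by move=> S' _; rewrite mulr_ge0 // weight_ge0.
    - by rewrite SXF cS eqxx.
    by rewrite (edges_sub SS) mulr1.
  rewrite [X in _ <= X](bigID (fun E => ~~ stars_good Delta nu xi p E)) /=.
  by rewrite lerDl sumr_ge0.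
rewrite /g exchange_big /=; apply: ler_sum => X _.
rewrite exchange_big /=; apply: ler_sum => F H.
rewrite exchange_big /=.
rewrite (eq_bigr (fun S => p ^+ Delta ^+ sfn #|F|)); last first.
  move=> S /andP[SXF /eqP cS].
  by rewrite (weight_prod_sub H SXF) cS.
rewrite sumr_const -cardsX -cards_draws mulr_natl.
rewrite (@eq_card _ _ [set S : {set ('I_n * {set 'I_n})} | (S \subset setX X F) & (#|S| == sfn #|F|)]) //.
by move=> S; rewrite inE.

Qed.

End Union.


Lemma ffact_le_exp N s : (N ^_ s <= N ^ s)%N.
Proof.
rewrite ffact_prod; apply: (@leq_trans (\prod_(i < s) N)).
  by apply: leq_prod => i _; rewrite leq_subr.
by rewrite prod_nat_const card_ord.
Qed.

Lemma bin_le_exp N s : ('C(N, s) <= N ^ s)%N.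
Proof.
apply: leq_trans (ffact_le_exp N s).
by rewrite -bin_ffact leq_pmulr // fact_gt0.
Qed.

Section RealEst.
Variable R : realType.

Lemma expR1_le4 : expR 1 <= 4 :> R.
Proof.
have h : 1 / 2 <= expR (- (1 / 2)) :> R.
  apply: le_trans (expR_ge1Dx _); lra.
have h2 : expR (1 / 2) <= 2 :> R.
  rewrite expRN in h.
  have hp := expR_gt0 (1 / 2 : R).
  have hi : expR (1/2) * (expR (1/2))^-1 = 1 :> R by rewrite mulfV // gt_eqF.
  nra.
have -> : (1 : R) = 2%:R * (1 / 2) by rewrite mul1r mulfV // pnatr_eq0.
rewrite expRM_natl.
have h0 : 0 <= expR (1 / 2) :> R := expR_ge0 _.
rewrite expr2. nra.
Qed.

Lemma pow_le_fact s : (s%:R ^+ s <= 4 ^+ s * s`!%:R :> R).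
Proof.
case: s => [|m]; first by rewrite !expr0 mul1r.
have h := @expR_ge1Dxn R m.+1%:R m (ler0n _ _).
have hf : (0 : R) < m.+1`!%:R by rewrite ltr0n fact_gt0.
have h1 : m.+1%:R ^+ m.+1 / m.+1`!%:R <= expR (m.+1%:R) :> R.
  by apply: le_trans h; rewrite lerDr.
have h2 : expR (m.+1%:R) <= 4 ^+ m.+1 :> R.
  rewrite -[X in expR X]mulr1 expRM_natl.
  by rewrite lerXn2r ?nnegrE ?expR_ge0 // expR1_le4.
by rewrite -ler_pdivrMr //; apply: le_trans h2.
Qed.

Lemma binom_bound N s : ('C(N, s) * s ^ s <= (4 * N) ^ s)%N.
Proof.
rewrite -(ler_nat R) natrM natrX.
apply: (@le_trans _ _ ('C(N, s)%:R * (4 ^+ s * s`!%:R))).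
  by rewrite ler_wpM2l // pow_le_fact.
rewrite mulrCA -natrM bin_ffact natrX natrM exprMn.
rewrite ler_wpM2l ?exprn_ge0 //.
by rewrite -natrX ler_nat ffact_le_exp.
Qed.

Lemma binom_real N s : (0 < s)%N -> 'C(N, s)%:R <= (4 * N%:R / s%:R) ^+ s :> R.
Proof.
move=> s0.
have hs : (0 : R) < s%:R ^+ s by rewrite exprn_gt0 // ltr0n.
rewrite expr_div_n ler_pdivlMr //.
have H : ('C(N,s) * s^s)%:R <= ((4*N)^s)%:R :> R by rewrite ler_nat binom_bound.
by move: H; rewrite natrM !natrX natrM.
Qed.

Lemma key_est (n k m s A : nat) (xi q : R) :
  (0 < k)%N -> (0 < A)%N -> 0 < xi -> 0 <= q ->
  k%:R <= xi * n%:R ->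
  (2 * A * k)%:R <= 6 * xi * n%:R * q * m%:R ->
  6 * xi * n%:R * q * m%:R < s%:R ->
  8 / (3 * xi) * (2/3) ^+ A.-1 <= 1 ->
  'C(n, k)%:R * 'C(k * m, s)%:R * q ^+ s <= (2/3) ^+ (s - A * k) :> R.
Proof.
move=> k0 A0 xi0 q0 kxn Ak hs hA.
have kR : (0 : R) < k%:R by rewrite ltr0n.
have nR : (0 : R) < n%:R.
  have : (0 : R) < xi * n%:R by apply: lt_le_trans kxn.
  by rewrite pmulr_rgt0.
have y0 : 0 <= 6 * xi * n%:R * q * m%:R by rewrite !mulr_ge0 // ltW.
have sR : (0 : R) < s%:R by apply: le_lt_trans hs.
have s0 : (0 < s)%N by rewrite -(ltr0n R).
have Aks : (A * k <= s)%N.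
  rewrite -(ler_nat R); apply: ltW; apply: le_lt_trans hs; apply: le_trans Ak.
  by rewrite ler_nat -mulnA leq_pmull.
pose a : R := 4 * n%:R / k%:R.
pose t : R := 2 * k%:R / (3 * xi * n%:R).
pose b : R := 4 * (k * m)%:R / s%:R.
have a0 : 0 <= a by rewrite /a !mulr_ge0 // ?invr_ge0 ltW.
have t0 : 0 <= t by rewrite /t !mulr_ge0 // invr_ge0 !mulr_ge0 // ltW.
have b0 : 0 <= b by rewrite /b !mulr_ge0 // invr_ge0 ltW.
have h1 : 'C(n, k)%:R <= a ^+ k := binom_real n k0.
have h2 : 'C(k * m, s)%:R * q ^+ s <= (b * q) ^+ s.
  by rewrite exprMn ler_wpM2r ?exprn_ge0 // binom_real.
have hbt : b * q <= t.
  rewrite /b mulrAC ler_pdivrMr //.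
  apply: (@le_trans _ _ (t * (6 * xi * n%:R * q * m%:R))); last first.
    by rewrite ler_wpM2l // ltW.
  rewrite le_eqVlt; apply/orP; left; apply/eqP; rewrite /t natrM; field.
  by rewrite !gt_eqF.
have hat : a * t = 8 / (3 * xi).
  by rewrite /a /t; field; rewrite !gt_eqF.
have ht : t <= 2/3.
  rewrite /t ler_pdivrMr ?mulr_gt0 //; lra.
apply: (@le_trans _ _ (a ^+ k * t ^+ s)).
  rewrite -mulrA; apply: ler_pM => //.
  - by rewrite mulr_ge0 ?exprn_ge0.
  - apply: le_trans h2 _; apply: lerXn2r => //; rewrite ?nnegrE ?mulr_ge0 //.
rewrite -[in t ^+ s](subnKC Aks) exprD mulrA.
rewrite exprM -exprMn.
apply: (@le_trans _ _ (1 * t ^+ (s - A * k))).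
  apply: ler_wpM2r; first by rewrite exprn_ge0.
  apply: exprn_ile1; first by rewrite mulr_ge0 // exprn_ge0.
  rewrite -(prednK A0) exprS mulrA hat; apply: le_trans hA.
  rewrite ler_wpM2l ?lerXn2r ?nnegrE //.
  by rewrite divr_ge0 // mulr_ge0 // ltW.
rewrite mul1r lerXn2r // nnegrE; lra.
Qed.

End RealEst.


Section Sums.
Variable R : realType.

Lemma sum_sub (I : finType) (P Q : pred I) (f : I -> R) :
  (forall i, P i -> Q i) -> (forall i, Q i -> 0 <= f i) ->
  \sum_(i | P i) f i <= \sum_(i | Q i) f i.
Proof.
move=> PQ f0; rewrite [\sum_(i | Q i) _](bigID P) /=.
rewrite (eq_bigl P); last by move=> i; case Pi: (P i); rewrite ?andbT ?andbF ?PQ.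
by rewrite lerDl; apply: sumr_ge0 => i /andP[Qi _]; exact: f0.
Qed.

Lemma sum_card (T : finType) (A : {set T}) (f : nat -> R) :
  \sum_(B : {set T} | B \subset A) f #|B| =
  \sum_(k < #|A|.+1) 'C(#|A|, k)%:R * f k.
Proof.
rewrite (partition_big (fun B : {set T} => (inord #|B| : 'I_(#|A|.+1))) xpredT) //=.
apply: eq_bigr => k _.
rewrite (eq_bigr (fun _ => f k)); last first.
  move=> B /andP[BA /eqP <-]; rewrite inordK //; exact: subset_leq_card.
rewrite sumr_const -cards_draws mulr_natl; congr (_ *+ _).
apply: eq_card => B; rewrite !inE /=.
apply/andP/andP => -[BA H]; split => //.
  by move/eqP: H => <-; rewrite inordK // ltnS subset_leq_card.
by apply/eqP/val_inj; rewrite /= inordK ?(eqP H) // ltnS -(eqP H) subset_leq_card.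
Qed.

Lemma geom_half M : \sum_(m < M) (1/2 : R) ^+ m <= 2.
Proof.
elim: M => [|M IH]; first by rewrite big_ord0; lra.
rewrite big_ord_recl expr0.
rewrite (eq_bigr (fun i : 'I_M => 1/2 * (1/2) ^+ i)); last first.
  by move=> i _; rewrite exprS.
rewrite -big_distrr /=; lra.
Qed.

Lemma bern (x : R) j : 0 <= x -> 1 + j%:R * x <= (1 + x) ^+ j.
Proof.
move=> x0; elim: j => [|j IH]; first by rewrite mul0r addr0 expr0.
rewrite exprS; apply: le_trans (_ : (1 + x) * (1 + j%:R * x) <= _).
  have : 0 <= j%:R * x * x by rewrite !mulr_ge0.
  rewrite -natr1; nra.
by rewrite ler_wpM2l // addr_ge0.
Qed.

End Sums.


Section Final.
Variable R : realType.

Lemma two3E : (2/3 : R) = expR (- ln (3/2)).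
Proof.
rewrite expRN lnK; last by rewrite posrE; lra.
by rewrite invf_div.
Qed.

Lemma exp_chain (r : nat) (Y : R) : Y <= r%:R ->
  (2/3 : R) ^+ r <= expR (- (ln (3/2) * Y)).
Proof.
move=> Yr; rewrite two3E -expRM_natl ler_expR.
have L0 : (0 : R) < ln (3/2) by apply: ln_gt0; lra.
rewrite mulrN lerN2 [X in _ <= X]mulrC ler_wpM2l //; exact: ltW.
Qed.

Lemma exp_ln_nat (n a : nat) : (0 < n)%N ->
  expR (- (a%:R * ln n%:R)) = (n%:R ^+ a)^-1 :> R.
Proof.
move=> n0; rewrite expRN expRM_natl lnK //.
by rewrite posrE ltr0n.
Qed.


Lemma fin_ineq (x : R) m : 2 <= x -> (0 < m)%N ->
  ((x ^+ 2) ^+ m)^-1 <= 2 * (x ^+ 2)^-1 * (1/2) ^+ m.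
Proof.
move=> x2 m0.
have x0 : 0 < x ^+ 2 by rewrite exprn_gt0 //; lra.
set y := (x ^+ 2)^-1.
have y0 : 0 <= y by rewrite /y invr_ge0 ltW.
have y2 : y <= 1/2.
  rewrite /y -div1r ler_pdivrMr // expr2; nra.
rewrite -exprVn -/y -(prednK m0) !exprS mulrA.
have : y ^+ m.-1 <= (1/2) ^+ m.-1 by rewrite lerXn2r // nnegrE; lra.
have : 0 <= y ^+ m.-1 by rewrite exprn_ge0.
nra.
Qed.

Section Term.
Variables (n Delta A : nat) (p xi cD : R).
Hypotheses (n2 : (2 <= n)%N) (D0 : (0 < Delta)%N) (A0 : (0 < A)%N) (xi0 : 0 < xi)
  (p01 : 0 <= p <= 1)
  (hA : 8 / (3 * xi) * (2/3) ^+ A.-1 <= 1)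
  (hc : (Delta + 2)%:R <= 3 * xi * cD * ln (3/2))
  (hq : cD * ln n%:R <= n%:R * p ^+ Delta).

Definition Gf (k m : nat) : R :=
  if (k%:R <= xi * n%:R) && (k%:R <= 3 * xi / A%:R * n%:R * p ^+ Delta * m%:R)
  then 'C(k * m, sfn n Delta p xi m)%:R * p ^+ Delta ^+ sfn n Delta p xi m else 0.

Lemma q0 : 0 <= p ^+ Delta.
Proof. by case/andP: p01 => p0 _; rewrite exprn_ge0. Qed.

Lemma Gf_ge0 k m : 0 <= Gf k m.
Proof. by rewrite /Gf; case: ifP => // _; rewrite mulr_ge0 // exprn_ge0 // q0. Qed.

Lemma term_bound k m :
  'C(n, k)%:R * ('C('C(n, Delta), m)%:R * Gf k m) <= 2 * (n%:R ^+ 2)^-1 * (1/2) ^+ m.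
Proof.
have nR : (0 : R) < n%:R by rewrite ltr0n; apply: leq_trans n2.
have n0 : (0 < n)%N by apply: leq_trans n2.
have rhs0 : 0 <= 2 * (n%:R ^+ 2)^-1 * (1/2 : R) ^+ m.
  by rewrite !mulr_ge0 ?exprn_ge0 ?invr_ge0 ?exprn_ge0 // ltW.
rewrite /Gf; case: ifP => [/andP[kx kn] | _]; last by rewrite !mulr0.
set s := sfn n Delta p xi m.
have s_pos : (0 < s)%N by [].
have [->|k0] := eqVneq k 0%N.
  by rewrite mul0n bin0n /s /sfn /= mul0r !mulr0.
have [->|m0] := eqVneq m 0%N.
  by rewrite muln0 bin0n /s /sfn /= mul0r !mulr0.
have k1 : (0 < k)%N by rewrite lt0n.
have m1 : (0 < m)%N by rewrite lt0n.
set z := 6 * xi * n%:R * p ^+ Delta * m%:R.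
have z0 : 0 <= z by rewrite /z !mulr_ge0 ?q0 // ltW.
have H2 : (2 * A * k)%:R <= z.
  have AR : (0 : R) < A%:R by rewrite ltr0n.
  rewrite natrM natrM.
  apply: (@le_trans _ _ (2%:R * A%:R * (3 * xi / A%:R * n%:R * p ^+ Delta * m%:R))).
    by rewrite ler_wpM2l // mulr_ge0 // ltW.
  rewrite /z le_eqVlt; apply/orP; left; apply/eqP; field.
  by rewrite gt_eqF.
have H3 : z < s%:R by rewrite /s /sfn truncnS_gt.
have hkey := key_est k1 A0 xi0 q0 kx H2 H3 hA.
rewrite mulrCA [X in _ * X]mulrA.
have Aks : (A * k <= s)%N.
  rewrite -(ler_nat R); apply: ltW; apply: le_lt_trans H3; apply: le_trans H2.
  by rewrite ler_nat -mulnA leq_pmull.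
set Y := 3 * xi * m%:R * (cD * ln n%:R).
have hY : Y <= (s - A * k)%:R.
  rewrite natrB // .
  have : (A * k)%:R <= z / 2.
    rewrite ler_pdivlMr //; apply: le_trans H2.
    by rewrite mulrC -natrM mulnA.
  have : Y <= z / 2.
    rewrite /Y /z.
    have : 0 <= 3 * xi * m%:R by rewrite !mulr_ge0 // ltW.
    move=> h0; apply: le_trans (ler_wpM2l h0 hq) _.
    by rewrite le_eqVlt; apply/orP; left; apply/eqP; field.
  lra.
have hexp := exp_chain hY.
have h4 : expR (- (ln (3 / 2) * Y)) <= (n%:R ^+ ((Delta + 2) * m))^-1.
  rewrite -exp_ln_nat // ler_expR lerN2 /Y natrM.
  have lnn : 0 <= ln (n%:R : R) by apply: ln_ge0; rewrite ler1n.
  have : 0 <= m%:R * ln (n%:R : R) by rewrite mulr_ge0.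
  move=> h0.
  apply: (@le_trans _ _ (3 * xi * cD * ln (3 / 2) * (m%:R * ln n%:R))).
    by rewrite -mulrA ler_wpM2r.
  rewrite le_eqVlt; apply/orP; left; apply/eqP; ring.
have hN : 'C('C(n, Delta), m)%:R <= (n%:R ^+ (Delta * m) : R).
  rewrite -natrX ler_nat; apply: leq_trans (bin_le_exp _ _) _.
  by rewrite expnM leq_exp2r // bin_le_exp.
apply: (@le_trans _ _ ((n%:R ^+ (Delta * m)) * (n%:R ^+ ((Delta + 2) * m))^-1)).
  apply: (ler_pM (ler0n _ _) _ hN).
    by rewrite !mulr_ge0 // exprn_ge0 // q0.
  by apply: le_trans hkey _; apply: le_trans hexp h4.
have -> : (n%:R ^+ (Delta * m)) * (n%:R ^+ ((Delta + 2) * m))^-1 = ((n%:R ^+ 2) ^+ m)^-1 :> R.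
  by rewrite mulnDl exprD invfM mulrA mulfV ?expf_neq0 ?gt_eqF // mul1r exprM.
apply: fin_ineq => //.
by rewrite (ler_nat R 2 n).
Qed.

Lemma total_bound :
  \sum_(X : {set 'I_n}) \sum_(F | HypXF Delta p (3 * xi / A%:R) xi X F)
     'C(#|X| * #|F|, sfn n Delta p xi #|F|)%:R * p ^+ Delta ^+ sfn n Delta p xi #|F|
  <= 8 / n%:R.
Proof.
have nR : (0 : R) < n%:R by rewrite ltr0n; apply: leq_trans n2.
pose Ds := [set f : {set 'I_n} | #|f| == Delta].
apply: (@le_trans _ _ (\sum_(X : {set 'I_n}) \sum_(F : {set {set 'I_n}} | F \subset Ds) Gf #|X| #|F|)).
  apply: ler_sum => X _.
  apply: (@le_trans _ _ (\sum_(F | HypXF Delta p (3 * xi / A%:R) xi X F) Gf #|X| #|F|)).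
    apply: ler_sum => F H.
    case/andP: H => /andP[/andP[/andP[Hf _] c1] c2] _.
    by rewrite /Gf c1 c2.
  apply: sum_sub; last by move=> F _; exact: Gf_ge0.
  move=> F /andP[/andP[/andP[/andP[/forall_inP Hf _] _] _] _].
  apply/subsetP => f fF; rewrite inE; by case/andP: (Hf f fF).
under eq_bigr do rewrite sum_card.
have -> : #|Ds| = 'C(n, Delta) by rewrite card_draws card_ord.
rewrite (eq_bigl (fun X : {set 'I_n} => X \subset setT)); last by move=> X; rewrite subsetT.
rewrite (sum_card _ (fun k => \sum_(m < 'C(n, Delta).+1) 'C('C(n, Delta), m)%:R * Gf k m)).
rewrite cardsT card_ord.
set y := (n%:R ^+ 2)^-1 : R.
apply: (@le_trans _ _ (\sum_(k < n.+1) (4 * y))).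
  apply: ler_sum => k _.
  rewrite big_distrr /=.
  apply: (@le_trans _ _ (\sum_(m < 'C(n, Delta).+1) 2 * y * (1/2) ^+ m)).
    by apply: ler_sum => m _; exact: term_bound.
  rewrite -big_distrr /=.
  have : 0 <= 2 * y by rewrite mulr_ge0 // /y invr_ge0 exprn_ge0 // ltW.
  move=> h; apply: le_trans (ler_wpM2l h (geom_half _ _)) _.
  by rewrite le_eqVlt; apply/orP; left; apply/eqP; ring.
rewrite sumr_const card_ord /y -mulr_natr -natr1.
have N2 : (2 : R) <= n%:R by rewrite (ler_nat R 2 n).
set N := (n%:R : R).
have hz : N^-1 * N = 1 by rewrite mulVf // gt_eqF.
have z0 : 0 < N^-1 by rewrite invr_gt0.
rewrite expr2 invfM mulrA.
have -> : 8 / N = 8 * N^-1 by [].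
nra.
Qed.


End Term.
End Final.


Local Open Scope classical_set_scope.
Local Open Scope ring_scope.

Lemma choose_A (R : realType) (xi : R) : 0 < xi ->
  exists A : nat, (0 < A)%N /\ 8 / (3 * xi) * (2/3) ^+ A.-1 <= 1.
Proof.
move=> xi0.
set M := 8 / (3 * xi).
have M0 : 0 <= M by rewrite /M divr_ge0 // mulr_ge0 // ltW.
exists (Num.truncn (2 * M)).+2; split => //=.
set j := (Num.truncn (2 * M)).+1.
have hj : 2 * M < j%:R by rewrite /j truncnS_gt.
have hv : M <= (3/2 : R) ^+ j.
  have hb2 := @bern R (1/2) j ltac:(lra).
  have -> : (3/2 : R) = 1 + 1/2 by lra.
  lra.
have hu : (2/3 : R) ^+ j * (3/2) ^+ j = 1.
  rewrite -exprMn.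
  have -> : (2/3 * (3/2) : R) = 1 by field.
  by rewrite expr1n.
have u0 : (0 : R) <= (2/3) ^+ j by rewrite exprn_ge0 //; lra.
nra.
Qed.

Lemma pow_inv_Delta (R : realType) (x : R) (D : nat) : (0 < D)%N -> 0 <= x ->
  (x `^ (D%:R^-1)) ^+ D = x.
Proof.
move=> D0 x0.
rewrite -powR_mulrn ?powR_ge0 // -powRrM mulVf ?pnatr_eq0 -?lt0n //.
by rewrite powRr1.
Qed.

Theorem lemma6p3 (R : realType) (Delta : nat) (xi : R) :
  (0 < Delta)%N -> 0 < xi ->
  exists nu c : R, 0 < nu /\ 0 < c /\
    forall p : nat -> R,
      (forall n, 0 <= p n <= 1) ->
      (\forall n \near \oo, c * (ln (n%:R) / n%:R) `^ (Delta%:R^-1) <= p n) ->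
      gnp_prob (p n) (stars_good Delta nu xi (p n) (n := n)) @[n --> \oo] --> (1 : R).
Proof.
move=> D0 xi0.
have [A [A0 hA]] := @choose_A R xi xi0.
have L0 : (0 : R) < ln (3/2) by apply: ln_gt0; lra.
set L := ln (3/2 : R) in L0.
set c := 1 + (Delta + 2)%:R / (3 * xi * L).
have K0 : 0 <= (Delta + 2)%:R / (3 * xi * L).
  by rewrite divr_ge0 // ltW // !mulr_gt0.
have c1 : 1 <= c by rewrite /c lerDl.
have c0 : 0 < c by apply: lt_le_trans c1.
exists (3 * xi / A%:R), c; split.
  by rewrite divr_gt0 // ?mulr_gt0 // ltr0n.
split => // p hp hev.
have hc : (Delta + 2)%:R <= 3 * xi * c ^+ Delta * L.
  have cc : c <= c ^+ Delta by apply: ler_eXnr.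
  have p3 : 0 < 3 * xi * L by rewrite !mulr_gt0.
  have : (Delta + 2)%:R <= 3 * xi * L * c.
    have e : 3 * xi * L * ((Delta + 2)%:R / (3 * xi * L)) = (Delta + 2)%:R.
      by rewrite mulrC mulfVK ?gt_eqF.
    rewrite /c mulrDr mulr1 e; lra.
  move=> h; apply: le_trans h _.
  by rewrite [3 * xi * c ^+ Delta * L]mulrAC ler_wpM2l // ltW.
pose Bad (n : nat) := \sum_(E : {set {set 'I_n}} | is_graph E && ~~ stars_good Delta (3 * xi / A%:R) xi (p n) E) gnp_weight (p n) E.
have -> : (fun n => gnp_prob (p n) (stars_good Delta (3 * xi / A%:R) xi (p n) (n:=n))) = (fun n => 1 - Bad n).
  by apply: funext => n; rewrite prob_compl.
rewrite -[X in _ --> X](subr0 (1:R)).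
apply: cvgB; first exact: cvg_cst.
apply: (@squeeze_cvgr _ _ _ _ (fun=> 0) (fun n => 16 * harmonic n)); last 2 first.
- exact: cvg_cst.
- have := cvgM (cvg_cst (16:R)) (@cvg_harmonic R).
  move=> h; rewrite -(mulr0 (16:R)); apply: h.
near=> n.
have n2 : (2 <= n)%N by near: n; exact: nbhs_infty_ge.
have hpn : c * (ln n%:R / n%:R) `^ (Delta%:R^-1) <= p n by near: n; exact: hev.
have nR : (0 : R) < n%:R by rewrite ltr0n; apply: leq_trans n2.
have hq : c ^+ Delta * ln n%:R <= n%:R * p n ^+ Delta.
  have x0 : (0 : R) <= ln n%:R / n%:R.
    have n1 : (1 <= n)%N by apply: (leq_trans _ n2).
    by rewrite divr_ge0 ?ln_ge0 ?ler1n ?(ltW nR).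
  have h1 : (c * (ln n%:R / n%:R) `^ (Delta%:R^-1)) ^+ Delta <= p n ^+ Delta.
    have pn0 : 0 <= p n by case/andP: (hp n).
    have w0 : 0 <= c * (ln n%:R / n%:R) `^ (Delta%:R^-1) by rewrite mulr_ge0 ?powR_ge0 // ltW.
    by apply: lerXn2r; rewrite ?nnegrE.
  rewrite exprMn pow_inv_Delta // mulrA ler_pdivrMr // in h1.
  by rewrite [n%:R * _]mulrC.
apply/andP; split; first by apply: sumr_ge0 => E _; exact: weight_ge0.
apply: le_trans (bad_bound n Delta (3 * xi / A%:R) (hp n) (ltW xi0)) _.
apply: le_trans (total_bound n2 A0 xi0 (hp n) hA hc hq) _.
rewrite /= ler_pdivrMr // mulrAC ler_pdivlMr ?ltr0n //.
have n1 : (1 : R) <= n%:R by rewrite ler1n; exact: (leq_trans _ n2).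
rewrite -[n.+1%:R]natr1; lra.
Unshelve. all: by end_near.
Qed.
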